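(* Let $G=(V,E)$ be a finite simple graph with maximum degree $\Delta$, let $w\in(0,1)$ and $M\subseteq E$. Then for all $A\in\mathcal W=\mathcal C_0\cup\mathcal C_2$ and all edges $e=\{u,v\}\in E$ with $A\oplus e\in\mathcal W$, \[ \Psi(A)\,\lambda(A)\,P(A,A\oplus e)\;\ge\;\frac{w^{|(A\oplus M)\cup e|}}{2\Delta}\;\ge\;\frac{w^{|(A\cup e)\oplus M|}}{2\Delta w^{-1}} . \]
   Context: Subgraphs of $G$ are identified with edge subsets $A\subseteq E$; $\oplus$ denotes symmetric difference, $(A\oplus M)\cup e$ means $(A\oplus M)\cup\{e\}$, $d(u)$ is the degree of $u$ in $G$, and $\partial A$ is the set of vertices of odd degree in $(V,A)$. $\mathcal C_k=\{A\subseteq E:|\partial A|=k\}$. $\lambda(A)=w^{|A\oplus M|}$. $\Psi(A)=|V|$ if $A\in\mathcal C_0$ and $\Psi(A)=2$ if $A\in\mathcal C_2$. $P$ is the transition matrix of the lazy worm process: for $A\in\mathcal W$ and $e=uv\in E$ with $A\oplus e\in\mathcal W$, (i) if $A\in\mathcal C_0$: $P(A,A\oplus e)=w^{\mathbf 1[e\notin A\oplus M]}\frac{1}{2|V|}\bigl(\frac1{d(u)}+\frac1{d(v)}\bigr)$; (ii) if $A\in\mathcal C_2$ and $A\oplus e\in\mathcal C_0$: $P(A,A\oplus e)=w^{\mathbf 1[e\notin A\oplus M]}\frac14\bigl(\frac1{d(u)}+\frac1{d(v)}\bigr)$; (iii) if $A\in\mathcal C_2$, $A\oplus e\in\mathcal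 C_2$ and $u\in\partial A$: $P(A,A\oplus e)=\min\!\bigl(\frac{d(u)}{d(v)}w^{\mathbf 1[e\notin A\oplus M]-\mathbf 1[e\in A\oplus M]},1\bigr)\frac{1}{4d(u)}$. *)

(* Defs.v *)
From HB Require Import structures.
From mathcomp Require Import all_boot all_order all_algebra.
Set Implicit Arguments. Unset Strict Implicit. Unset Printing Implicit Defensive.
Import Order.TTheory GRing.Theory Num.Theory.
Local Open Scope ring_scope.

(* An edge {u,v} is the
   2-element set [set u; v]; subgraphs are sets of edges. *)

Definition edges (T : finType) (adj : rel T) : {set {set T}} :=
  [set [set p.1; p.2] | p in [set p : T * T | adj p.1 p.2]].

Definition deg (T : finType) (adj : rel T) (u : T) : nat :=
  #|[set v | adj u v]|.

Definition maxdeg (T : finType) (adj : rel T) : nat :=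
  (\max_(u : T) deg adj u)%N.

Definition symdiff (T : finType) (A B : {set T}) : {set T} :=
  (A :\: B) :|: (B :\: A).

Definition boundary (T : finType) (A : {set {set T}}) : {set T} :=
  [set x | odd #|[set f in A | x \in f]|].

Definition inC (T : finType) (k : nat) (A : {set {set T}}) : bool :=
  #|boundary A| == k.

Definition inW (T : finType) (A : {set {set T}}) : bool :=
  inC 0 A || inC 2 A.

Definition Psi (R : numDomainType) (T : finType) (A : {set {set T}}) : R :=
  if inC 0 A then #|T|%:R else 2.

Definition lam (R : numDomainType) (T : finType) (w : R)
  (M A : {set {set T}}) : R := w ^+ #|symdiff A M|.

Definition Pworm (R : numFieldType) (T : finType) (adj : rel T) (w : R)
  (M A : {set {set T}}) (u v : T) : R :=
  let f := [set u; v] in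
  let AM := symdiff A M in
  let du : R := (deg adj u)%:R in
  let dv : R := (deg adj v)%:R in
  let wexp : R := w ^+ (f \notin AM) in
  if inC 0 A then
    wexp * (2 * #|T|%:R)^-1 * (du^-1 + dv^-1)
  else if inC 0 (symdiff A [set f]) then
    wexp * 4^-1 * (du^-1 + dv^-1)
  else if u \in boundary A then
    Num.min (du / dv * (w ^+ (f \notin AM) / w ^+ (f \in AM))) 1 * (4 * du)^-1
  else
    Num.min (dv / du * (w ^+ (f \notin AM) / w ^+ (f \in AM))) 1 * (4 * dv)^-1.

(* Main.v *)
Require Import Defs.
From HB Require Import structures.
From mathcomp Require Import all_boot all_order all_algebra.
From mathcomp Require Import ring lra.
Import Order.TTheory GRing.Theory Num.Theory.
Local Open Scope ring_scope.

Lemma inv2D (R : realFieldType) (D d : R) : 1 <= d -> d <= D ->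
  (2 * D)^-1 <= (2 * d)^-1.
Proof.
move=> h1 h2; rewrite lef_pV2 ?posrE; lra.
Qed.

Lemma minc (R : realFieldType) (w W D d1 d2 : R) (b : bool) :
  0 < w -> w <= 1 -> 0 < W -> 1 <= d1 -> d1 <= D -> 1 <= d2 -> d2 <= D ->
  W * w ^+ b / (2 * D) <= 2 * W * (Num.min (d1 / d2 * (w ^+ b / w ^+ (~~ b))) 1 * (4 * d1)^-1).
Proof.
move=> w0 w1 W0 a1 a2 c1 c2.
have wn : w != 0 by rewrite gt_eqF.
have d1n : d1 != 0 by rewrite gt_eqF //; lra.
have d2n : d2 != 0 by rewrite gt_eqF //; lra.
have iD0 : 0 <= (2 * D)^-1 by rewrite invr_ge0; lra.
have [hX|hX] := leP (d1 / d2 * (w ^+ b / w ^+ (~~ b))) 1.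
  case: b hX => /= hX.
    have -> : 2 * W * (d1 / d2 * (w / 1) * (4 * d1)^-1) = (W * w) * (2 * d2)^-1.
      by field; rewrite d1n d2n.
    apply: ler_pM => //; first by apply: mulr_ge0; lra.
    exact: inv2D.
  have -> : 2 * W * (d1 / d2 * (1 / w) * (4 * d1)^-1) = (W * w^-1) * (2 * d2)^-1.
    by field; rewrite d1n d2n wn.
  apply: ler_pM => //; first by rewrite mulr1; lra.
    rewrite mulr1 ler_pMr // invf_ge1 //.
  exact: inv2D.
have -> : 2 * W * (1 * (4 * d1)^-1) = W * (2 * d1)^-1.
  by field; rewrite d1n.
apply: ler_pM => //.
- by apply: mulr_ge0; [lra | apply: exprn_ge0; lra].
- by rewrite ger_pMr // exprn_ile1 //; lra.
- exact: inv2D.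
Qed.

Lemma divw (R : realFieldType) (x D w : R) : w != 0 -> D != 0 ->
  x / (2 * D * w^-1) = x * w * (2 * D)^-1.
Proof. by move=> wn Dn; field; rewrite wn Dn. Qed.

Lemma sumc (R : realFieldType) (D d1 d2 : R) :
  1 <= d1 -> d1 <= D -> 1 <= d2 ->
  (2 * D)^-1 <= (d1^-1 + d2^-1) / 2.
Proof.
move=> a1 a2 c1.
have h : (2 * D)^-1 <= (2 * d1)^-1 by apply: inv2D.
have e : (2 * d1)^-1 = d1^-1 / 2 by rewrite invfM mulrC.
have p : 0 <= d2^-1 by rewrite invr_ge0; lra.
lra.
Qed.

Lemma c1 (R : realFieldType) (w W D d1 d2 n : R) (b : bool) :
  0 < w -> 0 < W -> 0 < n -> 1 <= d1 -> d1 <= D -> 1 <= d2 ->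
  W * w ^+ b / (2 * D) <= n * W * (w ^+ b * (2 * n)^-1 * (d1^-1 + d2^-1)).
Proof.
move=> w0 W0 n0 a1 a2 c1.
have nn : n != 0 by rewrite gt_eqF.
have d1n : d1 != 0 by rewrite gt_eqF //; lra.
have d2n : d2 != 0 by rewrite gt_eqF //; lra.
have -> : n * W * (w ^+ b * (2 * n)^-1 * (d1^-1 + d2^-1)) =
  (W * w ^+ b) * ((d1^-1 + d2^-1) / 2)  by field; rewrite d1n d2n nn.
apply: ler_pM => //.
- by apply: mulr_ge0; [lra | apply: exprn_ge0; lra].
- by rewrite invr_ge0; lra.
- exact: sumc.
Qed.

Lemma c2 (R : realFieldType) (w W D d1 d2 : R) (b : bool) :
  0 < w -> 0 < W -> 1 <= d1 -> d1 <= D -> 1 <= d2 ->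
  W * w ^+ b / (2 * D) <= 2 * W * (w ^+ b * 4^-1 * (d1^-1 + d2^-1)).
Proof.
move=> w0 W0 a1 a2 c1.
have d1n : d1 != 0 by rewrite gt_eqF //; lra.
have d2n : d2 != 0 by rewrite gt_eqF //; lra.
have -> : 2 * W * (w ^+ b * 4^-1 * (d1^-1 + d2^-1)) =
  (W * w ^+ b) * ((d1^-1 + d2^-1) / 2) by field; rewrite d1n d2n.
apply: ler_pM => //.
- by apply: mulr_ge0; [lra | apply: exprn_ge0; lra].
- by rewrite invr_ge0; lra.
- exact: sumc.
Qed.

Theorem lemma1 (R : realFieldType) (T : finType) (adj : rel T)
  (adj_sym : symmetric adj) (adj_irr : irreflexive adj)
  (w : R) (w_gt0 : 0 < w) (w_lt1 : w < 1)
  (M : {set {set T}}) (M_sub : M \subset edges adj)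
  (A : {set {set T}}) (A_sub : A \subset edges adj) (A_W : inW A)
  (u v : T) (uv : adj u v) (Ae_W : inW (symdiff A [set [set u; v]])) :
  w ^+ #|symdiff A M :|: [set [set u; v]]| / (2 * (maxdeg adj)%:R)
    <= Psi R A * lam w M A * Pworm adj w M A u v
  /\
  w ^+ #|symdiff (A :|: [set [set u; v]]) M| / (2 * (maxdeg adj)%:R * w^-1)
    <= w ^+ #|symdiff A M :|: [set [set u; v]]| / (2 * (maxdeg adj)%:R).
Proof.
have vu : adj v u by rewrite adj_sym.
have du1 : (1 <= deg adj u)%N by apply/card_gt0P; exists v; rewrite inE.
have dv1 : (1 <= deg adj v)%N by apply/card_gt0P; exists u; rewrite inE.
have duD : (deg adj u <= maxdeg adj)%N by rewrite /maxdeg; exact: leq_bigmax.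
have dvD : (deg adj v <= maxdeg adj)%N by rewrite /maxdeg; exact: leq_bigmax.
have D1 : (1 <= maxdeg adj)%N by apply: leq_trans duD.
have w1 : w <= 1 by apply: ltW.
set f := [set u; v].
set AM := symdiff A M.
have hk : #|AM :|: [set f]| = (#|AM| + (f \notin AM))%N.
  by rewrite setUC cardsU1 addnC.
split; last first.
  have hs : AM :|: [set f] \subset (symdiff (A :|: [set f]) M) :|: [set f].
    apply/subsetP => x; rewrite /AM /symdiff !inE.
    by case: (x \in A); case: (x \in M); case: (x == f).
  have hc := subset_leq_card hs.
  rewrite (setUC (symdiff (A :|: [set f]) M)) cardsU1 in hc.
  have hc' : (#|AM :|: [set f]| <= #|symdiff (A :|: [set f]) M|.+1)%N.
    apply: (leq_trans hc); by rewrite -add1n leq_add2r leq_b1.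
  set m := #|symdiff (A :|: [set f]) M|.
  set k := #|AM :|: [set f]|.
  have Dp : 0 < (maxdeg adj)%:R :> R by rewrite ltr0n.
  have wn : w != 0 by rewrite gt_eqF.
  have Dn : (maxdeg adj)%:R != 0 :> R by rewrite gt_eqF.
  have -> : w ^+ m / (2 * (maxdeg adj)%:R * w^-1) = w ^+ m.+1 * (2 * (maxdeg adj)%:R)^-1.
    by rewrite exprSr divw.
  apply: ler_pM => //.
  - by apply: exprn_ge0; lra.
  - by rewrite invr_ge0; lra.
  - by apply: ler_wiXn2l => //; apply: ltW.
rewrite hk exprD.
set W := w ^+ #|AM|.
set b := f \notin AM.
have hb : (f \in AM) = ~~ b by rewrite /b negbK.
have W0 : 0 < W by apply: exprn_gt0.
have Du : 1 <= (deg adj u)%:R :> R by rewrite ler1n.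
have Dv : 1 <= (deg adj v)%:R :> R by rewrite ler1n.
have DuD : (deg adj u)%:R <= (maxdeg adj)%:R :> R by rewrite ler_nat.
have DvD : (deg adj v)%:R <= (maxdeg adj)%:R :> R by rewrite ler_nat.
have n0 : 0 < #|T|%:R :> R by rewrite ltr0n; apply/card_gt0P; exists u.
rewrite /Psi /lam /Pworm -/AM -/f -/b hb -/W.
case: ifP => h0.
  exact: c1.
case: ifP => h1.
  exact: c2.
case: ifP => h2.
  exact: minc.
exact: minc.
Qed.
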